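(* Consider Algorithm 1 applied to $\min\varphi(w)$ s.t. $w\in D$, and assume that the sublevel set $\mathcal S_\varphi(w^0):=\{w\in D:\varphi(w)\le\varphi(w^0)\}$ is bounded. Then exactly one of the following occurs: (i) in some outer iteration $j$ the inner loop does not terminate; then $w^{j,i}\to w^j$ as $i\to\infty$, $w^j$ is M-stationary, and $\|\gamma_{j,i}(w^j-w^{j,i})+\nabla\varphi(w^{j,i})-\nabla\varphi(w^j)\|\to0$ as $i\to\infty$; (ii) the inner loop always terminates; then the infinite sequence $\{w^j\}$ of outer iterates has convergent subsequences, and every subsequence with $w^j\to_K\bar w$ satisfies: $\bar w$ is M-stationary and $\gamma_j(w^{j+1}-w^j)\to_K0$.
   Context: $\mathbb W$ is a Euclidean space, $\varphi\colon\mathbb W\to\mathbb R$ continuously differentiable, $D\subset\mathbb W$ nonempty and closed (neither need be convex). A point $w\in D$ is M-stationary for $\min\varphi$ over $D$ if $0\in\nabla\varphi(w)+\mathcal N^{\lim}_D(w)$, where $\mathcal N^{\lim}_D(\bar w):=\limsup_{w\to\bar w}\operatorname{cone}(w-\Pi_D(w))$ (outer set limit, $\Pi_D$ the multivalued Euclidean projection). Algorithm 1 (general spectral gradient method, without termination test): parameters $\tau>1$, $\sigma\in(0,1)$, $0<\gamma_{\min}\le\gamma_{\max}<\infty$, $m\in\mathbb N$, starting point $w^0\in D$. For $j=0,1,2,\dots$: set $m_j:=\min(j,m)$ and choose $\gamma_j^0\in[\gamma_{\min},\gamma_{\max}]$; for $i=1,2,\dots$ set $\gamma_{j,i}:=\tau^{i-1}\gamma_j^0$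 and compute a (global) solution $w^{j,i}$ of $\min_w \varphi(w^j)+\langle\nabla\varphi(w^j),w-w^j\rangle+\frac{\gamma_{j,i}}2\|w-w^j\|^2$ s.t. $w\in D$ (subproblem $Q(j,i)$); the inner loop stops at the first $i$ with $\varphi(w^{j,i})\le\max_{r=0,\dots,m_j}\varphi(w^{j-r})+\sigma\langle\nabla\varphi(w^j),w^{j,i}-w^j\rangle$; then set $i_j:=i$, $\gamma_j:=\gamma_{j,i_j}$, $w^{j+1}:=w^{j,i_j}$. *)

(* Defs.v *)
(* W = 'rV[R]_n (Euclidean space R^n) with the
   standard inner product; topology = the product topology of mathcomp-analysis
   (which coincides with the Euclidean one). *)
From HB Require Import structures.
From mathcomp Require Import all_boot all_order all_algebra.
From mathcomp Require Import all_classical all_reals all_analysis.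
Set Implicit Arguments. Unset Strict Implicit. Unset Printing Implicit Defensive.
Import Order.TTheory GRing.Theory Num.Theory.
Import numFieldNormedType.Exports.
Local Open Scope classical_set_scope.
Local Open Scope ring_scope.

Section Defs.
Context {R : realType} {n : nat}.
Notation W := 'rV[R]_n.

Definition dot (u v : W) : R := \sum_(i < n) u ord0 i * v ord0 i.
Definition enorm (u : W) : R := Num.sqrt (dot u u).

Definition proj (D : set W) (w p : W) : Prop :=
  D p /\ forall q, D q -> enorm (w - p) <= enorm (w - q).

Definition cone (S : set W) : set W :=
  [set v | exists t s, 0 <= t /\ S s /\ v = t *: s].

(* limiting normal cone: outer (Painleve-Kuratowski) limit of
   cone(w - Pi_D(w)) as w -> wbar *)
Definition Nlim (D : set W) (wbar : W) : set W :=
  [set v | exists (wk vk : nat -> W),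
     wk @ \oo --> wbar /\ vk @ \oo --> v /\
     forall k, cone [set u | exists p, proj D (wk k) p /\ u = wk k - p] (vk k)].

Definition Mstationary (D : set W) (grad : W -> W) (w : W) : Prop :=
  exists v, Nlim D w v /\ grad w + v = 0.

Definition C1_with_grad (phi : W -> R) (grad : W -> W) : Prop :=
  continuous grad /\
  forall w, differentiable phi w /\ ('d phi w : W -> R) = (fun h => dot (grad w) h).

Definition gam (tau : R) (g0 : nat -> R) (j i : nat) : R := tau ^+ i.-1 * g0 j.

Definition Qobj (phi : W -> R) (grad : W -> W) (wj : W) (gji : R) (v : W) : R :=
  phi wj + dot (grad wj) (v - wj) + gji / 2 * enorm (v - wj) ^+ 2.

Definition refval (phi : W -> R) (w : nat -> W) (m j : nat) : R :=
  \big[Num.max/phi (w j)]_(r < (minn j m).+1) phi (w (j - r)%N).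

Definition accept (phi : W -> R) (grad : W -> W) (sigma : R) (m : nat)
  (w : nat -> W) (wi : nat -> nat -> W) (j i : nat) : Prop :=
  phi (wi j i) <= refval phi w m j + sigma * dot (grad (w j)) (wi j i - w j).

Definition terminates phi grad sigma m w wi (j : nat) : Prop :=
  exists i, (1 <= i)%N /\ accept phi grad sigma m w wi j i.

Definition reached phi grad sigma m w wi (j : nat) : Prop :=
  forall k, (k < j)%N -> terminates phi grad sigma m w wi k.

(* (w, g0, wi, ij) is a run of Algorithm 1: w = outer iterates,
   g0 j = gamma_j^0, wi j i = w^{j,i} (global solutions of Q(j,i), i >= 1),
   ij j = i_j (first accepted inner index) *)
Definition alg1_run (phi : W -> R) (grad : W -> W) (D : set W)
  (tau sigma gmin gmax : R) (m : nat) (w0 : W)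
  (w : nat -> W) (g0 : nat -> R) (wi : nat -> nat -> W) (ij : nat -> nat) : Prop :=
  w 0%N = w0 /\
  forall j, reached phi grad sigma m w wi j ->
    [/\ gmin <= g0 j <= gmax,
        (forall i, (1 <= i)%N ->
           D (wi j i) /\
           forall v, D v -> Qobj phi grad (w j) (gam tau g0 j i) (wi j i)
                            <= Qobj phi grad (w j) (gam tau g0 j i) v) &
        (terminates phi grad sigma m w wi j ->
           [/\ (1 <= ij j)%N, accept phi grad sigma m w wi j (ij j),
               (forall i, (1 <= i < ij j)%N -> ~ accept phi grad sigma m w wi j i) &
               w j.+1 = wi j (ij j)])].

End Defs.

(* Main.v *)
Require Import Defs.
From HB Require Import structures.
From mathcomp Require Import all_boot all_order all_algebra.
From mathcomp Require Import all_classical all_reals all_analysis.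
From mathcomp Require Import ring lra zify.
Import Order.TTheory GRing.Theory Num.Theory.
Import numFieldNormedType.Exports.
Local Open Scope classical_set_scope.
Local Open Scope ring_scope.
Set Implicit Arguments. Unset Strict Implicit. Unset Printing Implicit Defensive.
Section Basics.
Context {R : realType} {n : nat}.
Notation W := 'rV[R]_n.
Implicit Types u v x y : W.

Lemma dotC u v : dot u v = dot v u.
Proof. by apply: eq_bigr => i _; rewrite mulrC. Qed.

Lemma dotDl u v x : dot (u + v) x = dot u x + dot v x.
Proof. by rewrite /dot -big_split; apply: eq_bigr => i _; rewrite mxE mulrDl. Qed.

Lemma dotZl a u v : dot (a *: u) v = a * dot u v.
Proof. by rewrite /dot mulr_sumr; apply: eq_bigr => i _; rewrite mxE mulrA. Qed.

Lemma dotNl u v : dot (- u) v = - dot u v.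
Proof. by rewrite -scaleN1r dotZl mulN1r. Qed.

Lemma dotBl u v x : dot (u - v) x = dot u x - dot v x.
Proof. by rewrite dotDl dotNl. Qed.

Lemma dotDr u v x : dot x (u + v) = dot x u + dot x v.
Proof. by rewrite dotC dotDl !(dotC x). Qed.

Lemma dotZr a u v : dot v (a *: u) = a * dot v u.
Proof. by rewrite dotC dotZl dotC. Qed.

Lemma dotNr u v : dot v (- u) = - dot v u.
Proof. by rewrite dotC dotNl dotC. Qed.

Lemma dotBr u v x : dot x (u - v) = dot x u - dot x v.
Proof. by rewrite dotDr dotNr. Qed.

Lemma dot0l u : dot 0 u = 0.
Proof. by rewrite /dot big1 // => i _; rewrite mxE mul0r. Qed.

Lemma dot0r u : dot u 0 = 0.
Proof. by rewrite dotC dot0l. Qed.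

Lemma dot_ge0 u : 0 <= dot u u.
Proof. by apply: sumr_ge0 => i _; rewrite -expr2 sqr_ge0. Qed.

Lemma enorm_ge0 u : 0 <= enorm u.
Proof. exact: sqrtr_ge0. Qed.

Lemma enorm_sq u : enorm u ^+ 2 = dot u u.
Proof. by rewrite sqr_sqrtr // dot_ge0. Qed.

Lemma entry_le_enorm u i : `|u ord0 i| <= enorm u.
Proof.
rewrite -sqrtr_sqr /enorm ler_sqrt ?dot_ge0 // /dot (bigD1 i) //= -expr2 lerDl.
by apply: sumr_ge0 => j _; rewrite -expr2 sqr_ge0.
Qed.

Lemma normE u : `|u| = \big[Num.max/0]_ij `|u ij.1 ij.2|.
Proof. exact: mx_normrE. Qed.

Lemma entry_le_norm u i : `|u ord0 i| <= `|u|.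
Proof. by rewrite normE; apply: (le_bigmax _ _ (ord0, i)). Qed.

Lemma norm_le u e : 0 <= e -> (forall i, `|u ord0 i| <= e) -> `|u| <= e.
Proof.
move=> e0 H; rewrite normE; apply: bigmax_le => // -[a b] _ /=.
by rewrite (ord1 a); apply: H.
Qed.

Lemma norm_le_enorm u : `|u| <= enorm u.
Proof. by apply: norm_le; [exact: enorm_ge0| exact: entry_le_enorm]. Qed.

Lemma normsq_le_dot u : `|u| ^+ 2 <= dot u u.
Proof. by rewrite -enorm_sq lerXn2r ?nnegrE ?norm_le_enorm ?enorm_ge0. Qed.

Lemma dot_le u v : `|dot u v| <= n%:R * `|u| * `|v|.
Proof.
apply: (le_trans (ler_norm_sum _ _ _)).
apply: (@le_trans _ _ (\sum_(i < n) `|u| * `|v|)).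
  apply: ler_sum => i _; rewrite normrM.
  by apply: ler_pM; rewrite ?normr_ge0 ?entry_le_norm.
by rewrite sumr_const card_ord -mulrA mulr_natl.
Qed.

Lemma dot_le1 u v : `|dot u v| <= (n.+1)%:R * `|u| * `|v|.
Proof.
apply: (le_trans (dot_le u v)); by rewrite -!mulrA ler_wpM2r ?mulr_ge0 ?normr_ge0 // ler_nat.
Qed.

Lemma dot_sq_le u : dot u u <= n.+1%:R * `|u| ^+ 2.
Proof.
apply: (le_trans (real_ler_norm _)); first exact: num_real.
by rewrite expr2 mulrA; apply: dot_le1.
Qed.

End Basics.

Section Conv.
Context {R : realType}.

Definition cv {V : normedModType R} (u : nat -> V) (l : V) :=
  forall e, 0 < e -> exists N, forall k, (N <= k)%N -> `|u k - l| <= e.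

Lemma cvP {V : normedModType R} (u : nat -> V) l : u @ \oo --> l <-> cv u l.
Proof.
split.
  move=> /cvgrPdist_le H e e0; have [N _ HN] := H e e0.
  by exists N => k Nk; rewrite distrC; apply: HN.
move=> H; apply/cvgrPdist_le => e e0; have [N HN] := H e e0.
by exists N => // k /= Nk; rewrite distrC; apply: HN.
Qed.

Lemma contP {V U : normedModType R} (f : V -> U) x : {for x, continuous f} ->
  forall e, 0 < e -> exists2 d, 0 < d & forall y, `|y - x| <= d -> `|f y - f x| <= e.
Proof.
move=> /cvgrPdist_le H e e0.
have := H e e0; rewrite nearE => /nbhs_ballP[d /= d0 Hd].
exists (d / 2); first by rewrite divr_gt0.
move=> y yx; rewrite distrC; apply: Hd; rewrite -ball_normE /= distrC.
by apply: le_lt_trans yx _; rewrite ltr_pdivrMr // ltr_pMr // ltr1n.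
Qed.

End Conv.

Section MVT.
Context {R : realType} {n : nat}.
Notation W := 'rV[R]_n.

Lemma mvt_dot (phi : W -> R) (grad : W -> W) : C1_with_grad phi grad ->
  forall x y, exists c : R, 0 <= c <= 1 /\
    phi y - phi x = dot (grad (x + c *: (y - x))) (y - x).
Proof.
move=> [gc Hd] x y; set d := y - x.
pose h : R -> R := fun t => phi (x + t *: d).
have E t : (fun s : R => s^-1 *: ((h \o shift t) (s *: (1:R)) - h t)) =
   (fun s : R => s^-1 *: ((phi \o shift (x + t *: d)) (s *: d) - phi (x + t *: d))).
  apply/funext => s /=; rewrite /h /=; congr (_ *: (phi _ - _)).
  have sE : s *: (1:R) = s by rewrite -[RHS]mulr1.
  by rewrite sE scalerDl addrCA.
have Dh t : derivable h t 1 /\ 'D_1 h t = dot (grad (x + t *: d)) d.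
  have [dif dE] := Hd (x + t *: d).
  split; first by rewrite /derivable E; apply: diff_derivable.
  by rewrite /derive E -/(derive _ _ _) deriveE // dE.
have ID (t : R) : is_derive t (1:R) h (dot (grad (x + t *: d)) d).
  by rewrite -(Dh t).2; apply: derivableP (Dh t).1.
have [c c01 hc] := @MVT_segment R h (fun t => dot (grad (x + t *: d)) d) 0 1 ler01
  (fun t _ => ID t)
  (derivable_within_continuous (fun t _ => (Dh t).1)).
exists c; split; first by move: c01; rewrite in_itv.
by move: hc; rewrite /h scale0r addr0 scale1r subr0 mulr1 /d addrCA subrr addr0.
Qed.

End MVT.

Section Sub.
Context {R : realType} {n : nat}.
Notation W := 'rV[R]_n.
Implicit Types u v x y p q : W.

Lemma le_cancel (A B e : R) : 0 <= e -> 0 <= B -> A * e ^+ 2 <= B * e -> A * e <= B.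
Proof.
move=> e0 B0; have [->|ep] := eqVneq e 0; first by move=> _; rewrite mulr0.
have ep' : 0 < e by rewrite lt_def ep e0.
by rewrite expr2 mulrA ler_pM2r.
Qed.

Lemma dotBB u v : dot (u - v) (u - v) = dot u u - 2 * dot u v + dot v v.
Proof. rewrite !dotBl !dotBr (dotC v u); ring. Qed.

Variables (phi : W -> R) (grad : W -> W) (D : set W).

Definition Qopt x (g : R) p := D p /\ forall v, D v -> Qobj phi grad x g p <= Qobj phi grad x g v.

Lemma Qobj_dot x g v : Qobj phi grad x g v =
  phi x + dot (grad x) (v - x) + g / 2 * dot (v - x) (v - x).
Proof. by rewrite /Qobj enorm_sq. Qed.

Lemma Q_descent x g p : Qopt x g p -> D x ->
  dot (grad x) (p - x) + g / 2 * dot (p - x) (p - x) <= 0.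
Proof.
move=> [_ H] Dx; have := H x Dx; rewrite !Qobj_dot subrr dot0r dot0l; lra.
Qed.

Lemma Q_mono x g g' p p' : 0 < g -> g < g' -> Qopt x g p -> Qopt x g' p' ->
  dot (p' - x) (p' - x) <= dot (p - x) (p - x).
Proof.
move=> g0 gg [Dp Hp] [Dp' Hp'].
have := Hp p' Dp'; have := Hp' p Dp; rewrite !Qobj_dot.
set a := dot (p - x) _; set a' := dot (p' - x) _.
move=> h1 h2; nra.
Qed.

Lemma Q_bound x g p : 0 < g -> Qopt x g p -> D x ->
  g * `|p - x| <= 2 * n.+1%:R * `|grad x|.
Proof.
move=> g0 Q Dx; have h := Q_descent Q Dx.
apply: le_cancel; rewrite ?normr_ge0 ?mulr_ge0 ?ler0n //.
have h1 := normsq_le_dot (p - x).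
have h2 := dot_le1 (grad x) (p - x).
have h3 := ler_norm (dot (grad x) (p - x)).
rewrite -ler_normlW in h3 || idtac.
have h4 : - dot (grad x) (p - x) <= `|dot (grad x) (p - x)|.
  by rewrite -normrN ler_norm.
nra.
Qed.

Lemma prox_dot p z : D p -> (forall q, D q -> dot (z - p) (z - p) <= dot (z - q) (z - q)) ->
  forall t : R, 0 <= t <= 1 -> Defs.proj D (p + t *: (z - p)) p.
Proof.
move=> Dp H t /andP[t0 t1]; split=> // q Dq.
rewrite /enorm ler_sqrt ?dot_ge0 //.
have := H q Dq.
have -> : z - q = (z - p) - (q - p) by apply/rowP => i; rewrite !mxE; ring.
have -> : p + t *: (z - p) - q = t *: (z - p) - (q - p).
  by apply/rowP => i; rewrite !mxE; ring.
have -> : p + t *: (z - p) - p = t *: (z - p) by apply/rowP => i; rewrite !mxE; ring.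
rewrite (dotBB (z - p) (q - p)) (dotBB (t *: (z - p)) (q - p)) !dotZl !dotZr.
have bb := dot_ge0 (q - p).
set a := dot (z - p) (z - p); set ab := dot (z - p) (q - p); set b := dot (q - p) (q - p).
have bb' : 0 <= b by apply: dot_ge0.
move=> h; have [ab0|ab0] := leP 0 ab; nra.
Qed.

Lemma Q_proj x g p : 0 < g -> Qopt x g p ->
  forall t : R, 0 <= t <= 1 -> Defs.proj D (p + t *: ((x - g^-1 *: grad x) - p)) p.
Proof.
move=> g0 [Dp H]; apply: prox_dot => // q Dq.
have := H q Dq; rewrite !Qobj_dot.
have E v : x - g^-1 *: grad x - v = - ((v - x) + g^-1 *: grad x).
  by apply/rowP => i; rewrite !mxE; ring.
rewrite !E; move: (p - x) (q - x) (grad x) => P Q G.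
rewrite !dotNl !dotNr !opprK !dotDl !dotDr !dotZl !dotZr (dotC G P) (dotC G Q).
have gi : g * g^-1 = 1 by rewrite mulfV // gt_eqF.
have gi0 : 0 < g^-1 by rewrite invr_gt0.
set a := dot P P; set b := dot Q Q; set c := dot P G; set d := dot Q G.
move=> h.
have h2 : g^-1 * (c - d) <= g^-1 * (g / 2 * (b - a)).
  by apply: ler_wpM2l; [exact: ltW | lra].
have h3 : g^-1 * (g / 2 * (b - a)) = (b - a) / 2.
  by field; rewrite gt_eqF.
lra.

Qed.

End Sub.

Section Gen.
Context {R : realType} {n : nat}.
Notation W := 'rV[R]_n.
Implicit Types u v x y p q : W.
Notation N := (n.+1%:R : R).

Lemma N_ge1 : 1 <= N.
Proof. by rewrite ler1n. Qed.

Lemma enorm_le u : enorm u <= N * `|u|.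
Proof.
have h1 := dot_sq_le u; have h2 := N_ge1; have h3 := normr_ge0 u.
rewrite -(ger0_norm (enorm_ge0 u)) -(ger0_norm (x := N * `|u|)); last first.
  by rewrite mulr_ge0 // ler0n.
rewrite -ler_sqr ?nnegrE ?normr_ge0 // !real_normK ?num_real // enorm_sq.
nra.
Qed.

Lemma cv_shift {V : normedModType R} (u : nat -> V) l : cv (fun k => u k.+1) l -> cv u l.
Proof.
move=> H e e0; have [M HM] := H e e0; exists M.+1 => k Mk.
by case: k Mk => // k Mk; apply: HM.
Qed.

Lemma cv_squeeze {V : normedModType R} (u : nat -> V) l (b : nat -> R) :
  (forall k, `|u k - l| <= b k) -> cv b 0 -> cv u l.
Proof.
move=> H hb e e0; have [M HM] := hb e e0; exists M => k Mk.
apply: le_trans (H k) _; have := HM k Mk; rewrite subr0.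
by move/(le_trans (ler_norm _)).
Qed.

Lemma cv_eq {V : normedModType R} (u v : nat -> V) l :
  (forall k, u k = v k) -> cv u l -> cv v l.
Proof. by move=> E H e e0; have [M HM] := H e e0; exists M => k Mk; rewrite -E; apply: HM. Qed.

Lemma cvD' {V : normedModType R} (u v : nat -> V) a b :
  cv u a -> cv v b -> cv (fun k => u k + v k) (a + b).
Proof. by move=> /cvP ha /cvP hb; apply/cvP; apply: cvgD. Qed.

Lemma cvN' {V : normedModType R} (u : nat -> V) a :
  cv u a -> cv (fun k => - u k) (- a).
Proof. by move=> /cvP ha; apply/cvP; apply: cvgN. Qed.

Lemma cv_cont (f : W -> W) (u : nat -> W) a : continuous f -> cv u a -> cv (f \o u) (f a).
Proof.
move=> fc /cvP ha; apply/cvP; apply: continuous_cvg => //; exact: fc.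
Qed.

Lemma aux_t1 (K a : R) : 1 <= K -> 0 <= a -> (K * (1 + a))^-1 <= 1.
Proof.
move=> K1 a0; have h : 1 <= K * (1 + a) by nra.
by rewrite invf_le1 //; lra.
Qed.
Lemma aux_tz (K a : R) : 1 <= K -> 0 <= a -> (K * (1 + a))^-1 * a <= K^-1.
Proof.
move=> K1 a0.
rewrite invfM -mulrA ler_piMr ?invr_ge0 //; first lra.
by rewrite mulrC ler_pdivrMr; lra.
Qed.

Variables (phi : W -> R) (grad : W -> W) (D : set W).

Lemma Q_reject x g p (sigma : R) : C1_with_grad phi grad -> 0 < sigma < 1 -> 0 < g ->
  Qopt phi grad D x g p -> D x ->
  phi x + sigma * dot (grad x) (p - x) < phi p ->
  exists c : R, 0 <= c <= 1 /\
    (1 - sigma) / 2 * (g * `|p - x|) <= N * `|grad (x + c *: (p - x)) - grad x|.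
Proof.
move=> C1 /andP[s0 s1] g0 Q Dx rej.
have [c [c01 hc]] := mvt_dot C1 x p.
exists c; split => //.
have hd := Q_descent Q Dx.
set G := grad (x + c *: (p - x)) in hc *.
have e1 : dot (G - grad x) (p - x) = phi p - phi x - dot (grad x) (p - x).
  by rewrite dotBl hc.
have h2 := dot_le1 (G - grad x) (p - x).
have h3 : dot (G - grad x) (p - x) <= `|dot (G - grad x) (p - x)| by apply: ler_norm.
have h4 := normsq_le_dot (p - x).
have h5 := dot_ge0 (p - x).
have h6 : (1 - sigma) * (g / 2 * dot (p - x) (p - x)) <=
          (1 - sigma) * (- dot (grad x) (p - x)).
  by apply: ler_wpM2l; lra.
have h7 : (1 - sigma) / 2 * g * `|p - x| ^+ 2 <= (1 - sigma) / 2 * g * dot (p - x) (p - x).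
  by apply: ler_wpM2l => //; rewrite mulr_ge0 ?divr_ge0 ?ltW //; lra.
rewrite mulrA; apply: le_cancel; rewrite ?normr_ge0 ?mulr_ge0 ?ler0n //.
lra.
Qed.

Lemma mstat_seq (x q : nat -> W) (gm : nat -> R) (wbar : W) :
  (forall k, 0 < gm k) -> (forall k, Qopt phi grad D (x k) (gm k) (q k)) ->
  cv q wbar -> cv (fun k => gm k *: (x k - q k)) 0 -> cv (fun k => grad (x k)) (grad wbar) ->
  Mstationary D grad wbar.
Proof.
move=> g0 Q cq cg cgr.
pose z k := x k - (gm k)^-1 *: grad (x k).
pose t k : R := ((k.+1)%:R * (1 + `|z k - q k|))^-1.
have tpos k : 0 < t k by rewrite invr_gt0 mulr_gt0 ?ltr0n // ltr_wpDr.
have K1 k : 1 <= (k.+1)%:R :> R by rewrite ler1n.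
have t1 k : t k <= 1 by apply: aux_t1 => //; apply: normr_ge0.
have tz k : t k * `|z k - q k| <= (k.+1)%:R^-1 by apply: aux_tz => //; apply: normr_ge0.
exists (- grad wbar); split; last by rewrite subrr.
exists (fun k => q k + t k *: (z k - q k)), (fun k => gm k *: (z k - q k)).
split; [|split].
- apply/cvP; rewrite -[wbar]addr0; apply: cvD'; first exact: cq.
  apply: (@cv_squeeze _ _ _ (fun k => (k.+1)%:R^-1)).
    move=> k; rewrite (_ : forall u : W, u - 0 = u); last by move=> u; rewrite subr0.
    by rewrite normrZ ger0_norm ?(ltW (tpos k)) // tz.
  move=> e e0; have [M HM] : exists M : nat, e^-1 < M%:R.
    by exists (Num.truncn e^-1).+1; rewrite truncnS_gt.
  exists M => k Mk; rewrite subr0 ger0_norm ?invr_ge0 ?ler0n //.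
  rewrite invf_ple ?posrE ?ltr0n //; apply: (le_trans (ltW HM)).
  by rewrite ler_nat; apply: leq_trans Mk _.
- apply/cvP; rewrite -[- grad wbar]add0r.
  apply: (@cv_eq _ (fun k => gm k *: (x k - q k) + - grad (x k))).
    move=> k; rewrite /z; apply/rowP => i; rewrite !mxE; field.
    by rewrite gt_eqF.
  by apply: cvD' => //; apply: cvN'.
- move=> k; exists (gm k / t k), (t k *: (z k - q k)); split.
    by rewrite divr_ge0 ?ltW.
  split; last first.
    rewrite scalerA mulfVK ?gt_eqF //.
  exists (q k); split; last by apply/rowP => i; rewrite !mxE; ring.
  by apply: Q_proj => //; rewrite (ltW (tpos k)) t1.
Qed.

End Gen.

Section CaseI.
Context {R : realType} {n : nat}.
Notation W := 'rV[R]_n.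
Implicit Types u v x y p q : W.
Notation N := (n.+1%:R : R).

Lemma N_gt0 : 0 < N.
Proof. by rewrite ltr0n. Qed.

Lemma cv_const {V : normedModType R} (a : V) : cv (fun=> a) a.
Proof. by move=> e e0; exists 0%N => k _; rewrite subrr normr0 ltW. Qed.

Lemma cv0_norm {V : normedModType R} (u : nat -> V) : cv u 0 -> cv (fun k => `|u k|) 0.
Proof.
move=> H e e0; have [M HM] := H e e0; exists M => k Mk.
by rewrite subr0 normr_id -[u k]subr0; apply: HM.
Qed.

Lemma cv0_mul (c : R) (u : nat -> R) : cv u 0 -> cv (fun k => c * u k) 0.
Proof.
move=> H e e0.
have c1 : 0 < `|c| + 1 by rewrite ltr_wpDl.
have [M HM] := H (e / (`|c| + 1)) (divr_gt0 e0 c1); exists M => k Mk.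
have := HM k Mk; rewrite !subr0 normrM => h.
have h2 : `|c| * `|u k| <= (`|c| + 1) * (e / (`|c| + 1)).
  by apply: ler_pM; rewrite ?normr_ge0 ?lerDl.
by apply: le_trans h2 _; rewrite mulrC divfK ?gt_eqF.
Qed.

Lemma cv_dist {V : normedModType R} (u : nat -> V) a : cv u a -> cv (fun k => `|u k - a|) 0.
Proof.
move=> H e e0; have [M HM] := H e e0; exists M => k Mk.
by rewrite subr0 normr_id; apply: HM.
Qed.

Variables (phi : W -> R) (grad : W -> W) (D : set W).

Lemma case_i_shift (x : W) (q : nat -> W) (gm : nat -> R) (sigma : R) :
  C1_with_grad phi grad -> 0 < sigma < 1 -> D x ->
  (forall i, 0 < gm i) -> (forall K, exists M, forall i, (M <= i)%N -> K <= gm i) ->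
  (forall i, Qopt phi grad D x (gm i) (q i)) ->
  (forall i, phi x + sigma * dot (grad x) (q i - x) < phi (q i)) ->
  [/\ cv q x, Mstationary D grad x &
      cv (fun i => enorm (gm i *: (x - q i) + grad (q i) - grad x)) 0].
Proof.
move=> C1 s01 Dx gpos ginf Q rej.
have [s0 s1] := andP s01.
have S1 : cv q x.
  move=> e e0; set B := 2 * N * `|grad x|.
  have [M HM] := ginf (B / e); exists M => i Mi.
  have h1 := Q_bound (gpos i) (Q i) Dx; rewrite -/B in h1.
  have h2 := HM i Mi; have h3 := gpos i.
  have h4 : B <= gm i * e by rewrite -ler_pdivrMr.
  nra.
have S2 : cv (fun i => gm i *: (x - q i)) 0.
  move=> e e0.
  have eta0 : 0 < (1 - sigma) / 2 * e / N.
    apply: divr_gt0; [apply: mulr_gt0; [apply: divr_gt0; lra | exact: e0] | exact: N_gt0].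
  have [d d0 Hd] := contP (proj1 C1 x) eta0.
  have [M HM] := S1 d d0; exists M => i Mi.
  have [c [/andP [c0 c1] hc]] := Q_reject C1 s01 (gpos i) (Q i) Dx (rej i).
  rewrite subr0 normrZ ger0_norm ?(ltW (gpos i)) // -normrN opprB.
  have h1 : `|x + c *: (q i - x) - x| <= d.
    rewrite addrC addKr normrZ ger0_norm //; apply: le_trans (HM i Mi).
    by rewrite ler_piMl ?normr_ge0.
  have h2 := Hd _ h1.
  have h3 : N * `|grad (x + c *: (q i - x)) - grad x| <= (1 - sigma) / 2 * e.
    by rewrite -ler_pdivlMl ?N_gt0 // mulrC.
  have h4 := le_trans hc h3.
  by rewrite ler_pM2l ?divr_gt0 // ?subr_gt0 in h4.
have S3 : cv (fun i => grad (q i)) (grad x) by apply: cv_cont (proj1 C1) S1.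
split => //.
  apply: (mstat_seq (x := fun=> x) gpos Q S1 S2); exact: cv_const.
apply: (cv_squeeze (b := fun i => N * (`|gm i *: (x - q i)| + `|grad (q i) - grad x|))).
  move=> i; rewrite subr0 ger0_norm ?enorm_ge0 //.
  apply: le_trans (enorm_le _) _; rewrite ler_pM2l ?N_gt0 // -addrA.
  exact: ler_normD.
apply: cv0_mul; rewrite -[0]addr0; apply: cvD'.
  exact: cv0_norm S2.
exact: cv_dist S3.
Qed.

End CaseI.

Section Compact.
Context {R : realType} {n : nat}.
Notation W := 'rV[R]_n.

Lemma fun_bound (f : W -> W) (M : R) : continuous f ->
  exists G, 0 <= G /\ forall v, `|v| <= M -> `|f v| <= G.
Proof.
move=> fc.
pose A := [set v : W | `|v| <= M].
have cA : closed A.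
  have := @preimage_closed _ _ (fun v : W => `|v|) [set x : R | x <= M]
    (fun x _ => @norm_continuous _ _ x) (closed_le (y := M)).
  by [].
have bA : bounded_set A.
  exists M; split; first exact: num_real.
  by move=> x Mx v Av; apply: le_trans (ltW Mx).
have kA := bounded_closed_compact bA cA.
have kB := continuous_compact (continuous_subspaceT fc) kA.
have [G [Greal HG]] := compact_bounded kB.
exists (`|G| + 1); split; first by rewrite addr_ge0 ?normr_ge0.
move=> v Av; apply: (HG (`|G| + 1)).
  by apply: le_lt_trans (real_ler_norm Greal) _; rewrite ltrDl.
by exists v.
Qed.

End Compact.

Section BW.
Context {R : realType} {n : nat}.
Notation W := 'rV[R]_n.

Lemma bw_rV (u : nat -> W) (M : R) : (forall k, `|u k| <= M) ->
  exists (s : nat -> nat) (l : W), (forall k, (s k < s k.+1)%N) /\ cv (u \o s) l.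
Proof.
move=> uM.
pose A := [set v : W | `|v| <= M].
have cA : closed A.
  have := @preimage_closed _ _ (fun v : W => `|v|) [set x : R | x <= M]
    (fun x _ => @norm_continuous _ _ x) (closed_le (y := M)).
  by [].
have bA : bounded_set A.
  exists M; split; first exact: num_real.
  by move=> x Mx v Av; apply: le_trans (ltW Mx).
have kA := bounded_closed_compact bA cA.
have FA : (u @ \oo) A by exists 0%N => // k _; apply: uM.
have [l [Al cl]] := kA _ _ FA.
have H N k : exists j, (N < j)%N /\ `|u j - l| < (k.+1)%:R^-1.
  have := cl (u @` [set j | (N < j)%N]) (ball l (k.+1)%:R^-1).
  case.
  - by exists N.+1 => // j /= Nj; exists j.
  - by apply: nbhsx_ballx; rewrite invr_gt0 ltr0n.
  move=> y [[j /= Nj <-]]; rewrite -ball_normE /= => hj.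
  by exists j; split => //; rewrite distrC.
have /choice [ch Hch] : forall Nk : nat * nat,
    exists j, (Nk.1 < j)%N /\ `|u j - l| < (Nk.2.+1)%:R^-1.
  by move=> Nk; apply: H.
pose fix s k := if k is k'.+1 then ch (s k', k) else ch (0%N, 0%N).
exists s, l; split.
  by move=> k; exact: (Hch (s k, k.+1)).1.
move=> e e0.
have [K HK] : exists K : nat, e^-1 < K%:R.
  by exists (Num.truncn e^-1).+1; rewrite truncnS_gt.
exists K => k Kk; apply: ltW.
have hk : `|u (s k) - l| < (k.+1)%:R^-1.
  by case: k {Kk} => [|k]; [exact: (Hch (0%N, 0%N)).2 | exact: (Hch (s k, k.+1)).2].
apply: lt_le_trans hk _.
rewrite invf_ple ?posrE ?ltr0n //; apply: (le_trans (ltW HK)).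
by rewrite ler_nat; apply: leq_trans Kk _.
Qed.

End BW.

Section GLL.
Context {R : realType}.

Lemma gll (f Rr dd : nat -> R) (m : nat) (c Lp : R) :
  0 < c -> 0 <= Lp ->
  (forall k, f k.+1 <= Rr k - c * dd k ^+ 2) ->
  (forall k, 0 <= dd k) ->
  (forall k, `|f k - f k.+1| <= Lp * dd k) ->
  (forall k, Rr k.+1 <= Rr k) ->
  (exists B, forall k, B <= Rr k) ->
  (forall k, exists r, [/\ (r <= m)%N, (r <= k)%N & Rr k = f (k - r)%N]) ->
  cv dd 0.
Proof.
move=> c0 Lp0 desc dd0 lip mono [B HB] att.
have cvR : cv Rr (inf (Rr @` setT)).
  apply/cvP; apply: nonincreasing_cvgn.
    by apply/nonincreasing_seqP.
  by exists B => y [k _ <-].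
set L := inf _ in cvR.
have /choice [rr Hrr] := att.
pose l j := ((j + m.*2.+2) - rr (j + m.*2.+2))%N.
have lge j : (j + m.+2 <= l j)%N.
  by have [h1 h2 _] := Hrr (j + m.*2.+2)%N; rewrite /l; lia.
have lle j : (l j <= j + m.*2.+2)%N by rewrite /l; lia.
have Rl j : Rr (j + m.*2.+2)%N = f (l j) by have [_ _ ->] := Hrr (j + m.*2.+2)%N.
have Q : forall r, (r <= m.+1)%N -> forall e, 0 < e -> exists N, forall j, (N <= j)%N ->
    forall r', (r' <= r)%N -> `|f (l j - r')%N - L| <= e /\ ((0 < r')%N -> dd (l j - r')%N <= e).
  elim=> [_|r IH rm] e e0.
    have [N HN] := cvR e e0; exists N => j Nj r'; rewrite leqn0 => /eqP ->.
    split => //; rewrite subn0 -Rl; apply: HN; lia.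
  pose d := e / (2 * (Lp + 1)).
  have d0 : 0 < d by rewrite divr_gt0 // mulr_gt0 // ltr_wpDl.
  have Lpd : Lp * d <= e / 2.
    rewrite /d mulrA ler_pdivrMr ?mulr_gt0 ?ltr_wpDl //.
    have : 0 <= Lp * e by rewrite mulr_ge0 // ltW.
    lra.
  have de : d <= e.
    rewrite /d ler_pdivrMr ?mulr_gt0 ?ltr_wpDl //.
    have : 0 <= Lp * e by rewrite mulr_ge0 // ltW.
    lra.
  pose e1 := Num.min (e / 2) (c * d ^+ 2 / 2).
  have e1a : e1 <= e / 2 by rewrite /e1 ge_min lexx.
  have e1b : e1 <= c * d ^+ 2 / 2 by rewrite /e1 ge_min lexx orbT.
  have e10 : 0 < e1.
    rewrite /e1 lt_min; apply/andP; split; first by rewrite divr_gt0.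
    by rewrite divr_gt0 // mulr_gt0 // exprn_gt0.
  have [N1 HN1] := IH (ltnW rm) e1 e10.
  have [NR HNR] := cvR e1 e10.
  exists (maxn N1 NR) => j Nj r' r'r.
  have [N1j NRj] : (N1 <= j)%N /\ (NR <= j)%N by split; lia.
  case: (ltnP r' r.+1) => hr'.
    have [h1 h2] := HN1 j N1j r' (hr' : (r' <= r)%N).
    by split; [lra | move=> /h2; lra].
  have -> : r' = r.+1 by lia.
  set k := (l j - r.+1)%N.
  have kk : (l j - r)%N = k.+1 by have := lge j; rewrite /k; lia.
  have [h1 _] := HN1 j N1j r (leqnn r).
  rewrite kk in h1.
  have h2 := HNR k ltac:(have := lge j; rewrite /k; lia).
  have h3 := desc k.
  have /andP[h1a h1b] : - e1 <= f k.+1 - L <= e1 by rewrite -ler_norml.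
  have /andP[h2a h2b] : - e1 <= Rr k - L <= e1 by rewrite -ler_norml.
  have h5 : c * dd k ^+ 2 <= c * d ^+ 2 by lra.
  have h6 : dd k <= d.
    rewrite ler_pM2l // in h5.
    by rewrite -(ler_pXn2r (n := 2)) // ?nnegrE ?dd0 ?ltW.
  split; last by move=> _; lra.
  have h7 := lip k.
  have h8 : `|f k - L| <= `|f k - f k.+1| + `|f k.+1 - L|.
    have -> : f k - L = (f k - f k.+1) + (f k.+1 - L) by ring.
    exact: ler_normD.
  have h9 : Lp * dd k <= Lp * d by apply: ler_wpM2l.
  lra.
move=> e e0; have [N HN] := Q m.+1 (leqnn _) e e0.
exists (N + m.+1)%N => k Nk.
pose j := (k - m.+1)%N.
have Nj : (N <= j)%N by rewrite /j; lia.
have h1 := lge j; have h2 := lle j.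
have [_ /(_ ltac:(lia))] := HN j Nj (l j - k)%N ltac:(rewrite /j in h1 h2 *; lia).
have -> : (l j - (l j - k))%N = k by rewrite /j in h1 h2 *; lia.
by rewrite subr0 ger0_norm.
Qed.

End GLL.

Section Refval.
Context {R : realType} {n : nat}.
Notation W := 'rV[R]_n.
Variables (phi : W -> R) (w : nat -> W) (m : nat).

Lemma refval_ge j r : (r <= minn j m)%N -> phi (w (j - r)%N) <= refval phi w m j.
Proof.
move=> rj; rewrite /refval.
have rj' : (r < (minn j m).+1)%N by rewrite ltnS.
exact: (le_bigmax _ (fun r : 'I_(minn j m).+1 => phi (w (j - r)%N)) (Ordinal rj')).
Qed.

Lemma refval_self j : phi (w j) <= refval phi w m j.
Proof. by have := @refval_ge j 0 (leq0n _); rewrite subn0. Qed.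

Lemma refval_le j B : (forall r, (r <= minn j m)%N -> phi (w (j - r)%N) <= B) ->
  refval phi w m j <= B.
Proof.
move=> H; rewrite /refval; apply: bigmax_le.
  by have := H 0%N (leq0n _); rewrite subn0.
by move=> [r hr] _ /=; apply: H; rewrite -ltnS.
Qed.

Lemma refval_att j : exists r, [/\ (r <= m)%N, (r <= j)%N & refval phi w m j = phi (w (j - r)%N)].
Proof.
rewrite /refval.
apply: (big_ind (fun v => exists r, [/\ (r <= m)%N, (r <= j)%N & v = phi (w (j - r)%N)])).
- by exists 0%N; rewrite subn0.
- move=> x y [r1 [h1 h2 ->]] [r2 [h3 h4 ->]].
  by case: (leP (phi (w (j - r1)%N)) (phi (w (j - r2)%N))) => _; [exists r2 | exists r1].
- move=> [r hr] _ /=; exists r; split => //.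
    by apply: leq_trans (geq_minr j m); rewrite -ltnS.
  by apply: leq_trans (geq_minl j m); rewrite -ltnS.
Qed.

Lemma refval_mono j : phi (w j.+1) <= refval phi w m j ->
  refval phi w m j.+1 <= refval phi w m j.
Proof.
move=> h; apply: refval_le => r hr.
case: r hr => [|r] hr; first by rewrite subn0.
have -> : (j.+1 - r.+1 = j - r)%N by rewrite subSS.
apply: refval_ge; move: hr; rewrite /minn; case: ifP; case: ifP => // ; lia.
Qed.

End Refval.

Section CaseII.
Context {R : realType} {n : nat}.
Notation W := 'rV[R]_n.
Notation N := (n.+1%:R : R).
Variables (phi : W -> R) (grad : W -> W) (D : set W).

Lemma lip_ball (M G : R) x y : C1_with_grad phi grad -> 0 <= G ->
  (forall v, `|v| <= M -> `|grad v| <= G) -> `|x| <= M -> `|y| <= M ->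
  `|phi y - phi x| <= N * G * `|y - x|.
Proof.
move=> C1 G0 HG xM yM.
have [c [/andP [c0 c1] ->]] := mvt_dot C1 x y.
have hxi : `|x + c *: (y - x)| <= M.
  have -> : x + c *: (y - x) = (1 - c) *: x + c *: y by apply/rowP => i; rewrite !mxE; ring.
  apply: le_trans (ler_normD _ _) _; rewrite !normrZ !ger0_norm ?subr_ge0 //.
  have : (1 - c) * `|x| <= (1 - c) * M by apply: ler_wpM2l; rewrite ?subr_ge0.
  have : c * `|y| <= c * M by apply: ler_wpM2l.
  lra.
apply: le_trans (dot_le1 _ _) _.
rewrite ler_wpM2r ?normr_ge0 // ler_wpM2l ?ler0n //; exact: HG.
Qed.

Lemma cv_sub {V : normedModType R} (u : nat -> V) l (s : nat -> nat) :
  (forall k, (k <= s k)%N) -> cv u l -> cv (u \o s) l.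
Proof.
move=> hs H e e0; have [M HM] := H e e0; exists M => k Mk.
by apply: HM; apply: leq_trans Mk (hs k).
Qed.

Lemma incr_ge (s : nat -> nat) : (forall k, (s k < s k.+1)%N) -> forall k, (k <= s k)%N.
Proof. by move=> hs; elim=> // k IH; apply: leq_ltn_trans IH (hs k). Qed.

Lemma case_ii (sigma tau gmin gmax M : R) (m : nat) (w : nat -> W) (gm : nat -> R) :
  C1_with_grad phi grad -> 0 < sigma < 1 -> 1 < tau -> 0 < gmin -> gmin <= gmax ->
  (forall j, D (w j)) ->
  (forall j, `|w j| <= M) ->
  (forall j, gmin <= gm j) ->
  (forall j, Qopt phi grad D (w j) (gm j) (w j.+1)) ->
  (forall j, phi (w j.+1) <= refval phi w m j + sigma * dot (grad (w j)) (w j.+1 - w j)) ->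
  (forall j, gm j <= gmax \/ exists gh p, [/\ 0 < gh, gm j = tau * gh,
       Qopt phi grad D (w j) gh p & phi (w j) + sigma * dot (grad (w j)) (p - w j) < phi p]) ->
  cv (fun j => w j.+1 - w j) 0.
Proof.
move=> C1 /andP[s0 s1] t1 gmin0 gg Dw wM gmg Q acc rej.
have [G [G0 HG]] := fun_bound M (proj1 C1).
have Lp0 : 0 <= N * G by rewrite mulr_ge0 ?ler0n.
have dd0 : cv (fun j => `|w j.+1 - w j|) 0.
  apply: (@gll R (fun k => phi (w k)) (refval phi w m) (fun k => `|w k.+1 - w k|) m
     (sigma * gmin / 2) (N * G)).
  - by rewrite divr_gt0 ?mulr_gt0.
  - exact: Lp0.
  - move=> k; have hd := Q_descent (Q k) (Dw k).
    have h1 := normsq_le_dot (w k.+1 - w k).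
    have h2 := acc k; have h3 := gmg k.
    set DD := dot (w k.+1 - w k) _ in hd h1.
    move: h1; set a := `|w k.+1 - w k| => h1.
    have h4 : gmin / 2 * a ^+ 2 <= gm k / 2 * DD.
      apply: ler_pM; rewrite ?sqr_ge0 //.
        by apply: divr_ge0 => //; apply: ltW.
      lra.
    have h5 : sigma * (gmin / 2 * a ^+ 2) <= sigma * (gm k / 2 * DD) by apply: ler_wpM2l; lra.
    have h6 : sigma * (dot (grad (w k)) (w k.+1 - w k) + gm k / 2 * DD) <= 0.
      by rewrite mulr_ge0_le0 // ltW.
    lra.
  - by move=> k; apply: normr_ge0.
  - move=> k; rewrite distrC; exact: (lip_ball C1 G0 HG (wM k) (wM k.+1)).
  - move=> k; apply: refval_mono; apply: le_trans (acc k) _.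
    rewrite gerDl.
    have hd := Q_descent (Q k) (Dw k).
    have := dot_ge0 (w k.+1 - w k); have := gmg k.
    move=> h1 h2; have h3 : 0 <= gm k / 2 * dot (w k.+1 - w k) (w k.+1 - w k).
      by rewrite mulr_ge0 // divr_ge0 //; lra.
    nra.
  - exists (phi (w 0%N) - N * G * (M + M)) => k.
    apply: le_trans (refval_self phi w m k).
    have h := lip_ball C1 G0 HG (wM 0%N) (wM k).
    have h2 : `|w k - w 0%N| <= M + M.
      by apply: le_trans (ler_normB _ _) _; apply: lerD.
    have h3 : N * G * `|w k - w 0%N| <= N * G * (M + M) by apply: ler_wpM2l.
    have := ler_normlW h; rewrite ler_norml in h; case/andP: h => ha hb.
    lra.
  - move=> k; exact: refval_att.
move=> e e0; have [K HK] := dd0 e e0; exists K => k Kk.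
by have := HK k Kk; rewrite !subr0 normr_id.
Qed.

End CaseII.

Section CaseII2.
Context {R : realType} {n : nat}.
Notation W := 'rV[R]_n.
Notation N := (n.+1%:R : R).
Variables (phi : W -> R) (grad : W -> W) (D : set W).

Lemma norm_le_Nnorm_of_dot (u v : W) : dot u u <= dot v v -> `|u| <= N * `|v|.
Proof.
move=> h; apply: le_trans (norm_le_enorm u) _; apply: le_trans (enorm_le v).
by rewrite /enorm ler_sqrt ?dot_ge0.
Qed.

Lemma case_ii_sub (sigma tau gmin gmax M : R) (m : nat) (w : nat -> W) (gm : nat -> R)
  (s : nat -> nat) (wbar : W) :
  C1_with_grad phi grad -> 0 < sigma < 1 -> 1 < tau -> 0 < gmin -> gmin <= gmax ->
  (forall j, D (w j)) ->
  (forall j, `|w j| <= M) ->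
  (forall j, gmin <= gm j) ->
  (forall j, Qopt phi grad D (w j) (gm j) (w j.+1)) ->
  (forall j, phi (w j.+1) <= refval phi w m j + sigma * dot (grad (w j)) (w j.+1 - w j)) ->
  (forall j, gm j <= gmax \/ exists gh p, [/\ 0 < gh, gm j = tau * gh,
       Qopt phi grad D (w j) gh p & phi (w j) + sigma * dot (grad (w j)) (p - w j) < phi p]) ->
  (forall k, (s k < s k.+1)%N) -> cv (w \o s) wbar ->
  Mstationary D grad wbar /\ cv (fun k => gm (s k) *: (w (s k).+1 - w (s k))) 0.
Proof.
move=> C1 s01 t1 gmin0 gg Dw wM gmg Q acc rej sinc cws.
have [s0 s1] := andP s01.
have dd := case_ii C1 s01 t1 gmin0 gg Dw wM gmg Q acc rej.
have sge := incr_ge sinc.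
have dds := cv_sub sge dd.
have [G [G0 HG]] := fun_bound M (proj1 C1).
have gpos j : 0 < gm j by apply: lt_le_trans (gmg j).
have S2 : cv (fun k => gm (s k) *: (w (s k).+1 - w (s k))) 0.
  move=> e e0.
  have N0 := N_gt0 (n := n).
  have t0 : 0 < tau by lra.
  set eta := (1 - sigma) / 2 * (e / (tau * N)) / (2 * N).
  have eta0 : 0 < eta.
    have a0 : 0 < (1 - sigma) / 2 by apply: divr_gt0 => //; lra.
    apply: divr_gt0; last by apply: mulr_gt0.
    by apply: mulr_gt0 => //; apply: divr_gt0 => //; apply: mulr_gt0.
  have Neta : N * (2 * eta) = (1 - sigma) / 2 * (e / (tau * N)).
    have nn : 0 <= n%:R :> R by rewrite ler0n.
    rewrite /eta; field; apply/andP; split; last by rewrite gt_eqF.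
    by rewrite gt_eqF //; lra.
  have [d0 d00 Hd0] := contP (proj1 C1 wbar) eta0.
  set Gam := 4 * N * G / d0 + 1.
  have Gam0 : 0 < Gam.
    have : 0 <= 4 * N * G / d0.
      by apply: divr_ge0; [apply: mulr_ge0 => //; apply: mulr_ge0; rewrite ?ler0n | apply: ltW].
    rewrite /Gam; lra.
  set e2 := e / (Gam * tau + gmax + 1).
  have den0 : 0 < Gam * tau + gmax + 1.
    have : 0 < Gam * tau by rewrite mulr_gt0.
    lra.
  have e20 : 0 < e2 by rewrite divr_gt0.
  have d2 : 0 < d0 / 2 by rewrite divr_gt0.
  have [K1 HK1] := cws (d0 / 2) d2.
  have [K2 HK2] := dds e2 e20.
  exists (maxn K1 K2) => k Kk.
  have K1k : (K1 <= k)%N by apply: leq_trans (leq_maxl _ _) Kk.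
  have K2k : (K2 <= k)%N by apply: leq_trans (leq_maxr _ _) Kk.
  set j := s k; set x := w j.
  have hx : `|x - wbar| <= d0 / 2 by apply: HK1.
  have hd : `|w j.+1 - x| <= e2.
    by have := HK2 k K2k; rewrite subr0.
  have hd0 := normr_ge0 (w j.+1 - x).
  rewrite subr0 normrZ ger0_norm ?(ltW (gpos j)) //.
  have e2g : e2 * (Gam * tau + gmax + 1) = e by rewrite /e2 divfK ?gt_eqF.
  case: (rej j) => [gj|[gh [p [gh0 gmE Qh rj]]]].
    have : gm j * `|w j.+1 - x| <= gmax * e2.
      by apply: ler_pM => //; apply: ltW.
    have : 0 <= Gam * tau * e2 by apply: mulr_ge0; [apply: mulr_ge0|]; apply: ltW.
    lra.
  have [ghG|ghG] := leP gh Gam.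
    rewrite gmE.
    have : tau * gh * `|w j.+1 - x| <= tau * Gam * e2.
      apply: ler_pM => //; first by rewrite mulr_ge0 ?ltW.
      by apply: ler_wpM2l => //; apply: ltW.
    have : 0 <= gmax * e2 by rewrite mulr_ge0 // ltW //; apply: lt_le_trans gg.
    lra.
  have hp1 := Q_bound gh0 Qh (Dw j).
  have hgx : `|grad x| <= G.
    by apply: HG; apply: wM.
  have hp2 : gh * `|p - x| <= 2 * N * G.
    apply: le_trans hp1 _; apply: ler_wpM2l => //; rewrite mulr_ge0 ?ler0n //.
  have hp3 : `|p - x| <= d0 / 2.
    have GamE : Gam * (d0 / 2) = 2 * N * G + d0 / 2.
      by rewrite /Gam; field; rewrite gt_eqF.
    have hq : Gam * `|p - x| <= gh * `|p - x| by apply: ler_wpM2r => //; apply: ltW.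
    have hpos := normr_ge0 (p - x).
    have : Gam * `|p - x| <= Gam * (d0 / 2) by rewrite GamE; lra.
    by rewrite ler_pM2l.
  have [c [/andP [c0 c1] hc]] := Q_reject C1 s01 gh0 Qh (Dw j) rj.
  have hxi : `|x + c *: (p - x) - wbar| <= d0.
    have -> : x + c *: (p - x) - wbar = (x - wbar) + c *: (p - x).
      by apply/rowP => i; rewrite !mxE; ring.
    apply: le_trans (ler_normD _ _) _; rewrite normrZ ger0_norm //.
    have : c * `|p - x| <= `|p - x| by rewrite ler_piMl.
    lra.
  have h1 := Hd0 _ hxi.
  have h2 : `|grad x - grad wbar| <= eta by apply: Hd0; lra.
  have h3 : `|grad (x + c *: (p - x)) - grad x| <= 2 * eta.
    have -> : grad (x + c *: (p - x)) - grad x =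
       (grad (x + c *: (p - x)) - grad wbar) - (grad x - grad wbar).
      by apply/rowP => i; rewrite !mxE; ring.
    apply: le_trans (ler_normB _ _) _; lra.
  have h4 : (1 - sigma) / 2 * (gh * `|p - x|) <= (1 - sigma) / 2 * (e / (tau * N)).
    by rewrite -Neta; apply: le_trans hc _; apply: ler_wpM2l => //; apply: ltW.
  rewrite ler_pM2l ?divr_gt0 // in h4; last by lra.
  have h5 : `|w j.+1 - x| <= N * `|p - x|.
    apply: norm_le_Nnorm_of_dot; apply: (Q_mono gh0 _ Qh (Q j)).
    by rewrite gmE ltr_pMl.
  rewrite gmE.
  have h6 : tau * gh * `|w j.+1 - x| <= tau * gh * (N * `|p - x|).
    by apply: ler_wpM2l => //; rewrite mulr_ge0 ?ltW.
  have h7 : tau * N * (gh * `|p - x|) <= tau * N * (e / (tau * N)).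
    by apply: ler_wpM2l => //; rewrite mulr_ge0 ?ltW.
  have h8 : tau * N * (e / (tau * N)) = e.
    by rewrite mulrC divfK // gt_eqF // mulr_gt0.
  apply: (le_trans h6); rewrite -h8.
  have -> : tau * gh * (N * `|p - x|) = tau * N * (gh * `|p - x|) by ring.
  exact: h7.
split => //.
have cq : cv (fun k => w (s k).+1) wbar.
  apply: (cv_eq (u := fun k => w (s k) + (w (s k).+1 - w (s k)))).
    by move=> k; rewrite addrC subrK.
  rewrite -[wbar]addr0; apply: cvD' => //.
apply: (mstat_seq (phi := phi) (x := w \o s) (q := fun k => w (s k).+1) (gm := gm \o s)) => //.
- by move=> k; apply: gpos.
- by move=> k; exact: (Q (s k)).
- rewrite -oppr0; apply: (cv_eq (u := fun k => - (gm (s k) *: (w (s k).+1 - w (s k))))).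
    by move=> k /=; rewrite -scalerN opprB.
  by apply: cvN'.
- exact: (cv_cont (proj1 C1) cws).
Qed.

End CaseII2.

Section Main.
Context {R : realType}.

Lemma bern (t : R) k : 1 <= t -> 1 + k%:R * (t - 1) <= t ^+ k.
Proof.
move=> t1; elim: k => [|k IH]; first by rewrite mul0r addr0 expr0.
rewrite exprS -natr1.
have h : 0 <= t ^+ k by apply: exprn_ge0; lra.
have hk : 0 <= k%:R :> R by rewrite ler0n.
have a : t * (1 + k%:R * (t - 1)) <= t * t ^+ k by apply: ler_wpM2l => //; lra.
have b : 0 <= k%:R * (t - 1) * (t - 1) by apply: mulr_ge0; [apply: mulr_ge0|]; lra.
lra.
Qed.

Lemma pow_inf (t g : R) : 1 < t -> 0 < g ->
  forall K, exists M, forall i, (M <= i)%N -> K <= t ^+ i * g.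
Proof.
move=> t1 g0 K.
have tg : 0 < (t - 1) * g by rewrite mulr_gt0 // subr_gt0.
exists (Num.truncn (`|K| / ((t - 1) * g))).+1 => i Mi.
have h1 := truncnS_gt (`|K| / ((t - 1) * g)).
have h2 : (Num.truncn (`|K| / ((t - 1) * g))).+1%:R <= i%:R :> R by rewrite ler_nat.
have h3 : `|K| / ((t - 1) * g) < i%:R := lt_le_trans h1 h2.
rewrite ltr_pdivrMr // in h3.
have h4 := bern i (ltW t1).
have h5 : (1 + i%:R * (t - 1)) * g <= t ^+ i * g by rewrite ler_wpM2r // ltW.
have h6 := ler_norm K.
have hi : 0 <= i%:R :> R by rewrite ler0n.
nra.
Qed.

End Main.

Unset Implicit Arguments.

Theorem mainTheorem6 (R : realType) (n : nat)
  (phi : 'rV[R]_n -> R) (grad : 'rV[R]_n -> 'rV[R]_n) (D : set 'rV[R]_n)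
  (tau sigma gmin gmax : R) (m : nat) (w0 : 'rV[R]_n)
  (w : nat -> 'rV[R]_n) (g0 : nat -> R) (wi : nat -> nat -> 'rV[R]_n)
  (ij : nat -> nat) :
  C1_with_grad phi grad ->
  closed D ->
  1 < tau -> 0 < sigma < 1 -> 0 < gmin -> gmin <= gmax ->
  D w0 ->
  (exists M : R, forall v, D v -> phi v <= phi w0 -> enorm v <= M) ->
  alg1_run phi grad D tau sigma gmin gmax m w0 w g0 wi ij ->
  (* case (i): some inner loop does not terminate *)
  (forall j, reached phi grad sigma m w wi j ->
     ~ terminates phi grad sigma m w wi j ->
     [/\ wi j @ \oo --> w j,
         Mstationary D grad (w j) &
         (fun i => enorm (gam tau g0 j i *: (w j - wi j i) + grad (wi j i) - grad (w j)))
           @ \oo --> 0]) /\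
  (* case (ii): all inner loops terminate *)
  ((forall j, terminates phi grad sigma m w wi j) ->
     (exists (s : nat -> nat) (wbar : 'rV[R]_n),
        (forall k, (s k < s k.+1)%N) /\ (w \o s) @ \oo --> wbar) /\
     (forall (s : nat -> nat) (wbar : 'rV[R]_n),
        (forall k, (s k < s k.+1)%N) -> (w \o s) @ \oo --> wbar ->
        Mstationary D grad wbar /\
        (fun k => gam tau g0 (s k) (ij (s k)) *: (w (s k).+1 - w (s k))) @ \oo --> (0 : 'rV[R]_n))).
Proof.
move=> C1 _ t1 s01 gmin0 gg Dw0 [M0 HM0] [w00 H].
have [s0 s1] := andP s01.
have t0 : 0 < tau by lra.
have g0pos j : reached phi grad sigma m w wi j -> 0 < g0 j.
  by move=> rj; have [/andP[h _] _ _] := H j rj; apply: lt_le_trans h.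
have gampos j i : reached phi grad sigma m w wi j -> 0 < gam tau g0 j i.
  by move=> rj; rewrite /gam mulr_gt0 ?exprn_gt0 ?g0pos.
have Qji j i : reached phi grad sigma m w wi j -> (1 <= i)%N ->
    Qopt phi grad D (w j) (gam tau g0 j i) (wi j i).
  by move=> rj i1; have [_ h _] := H j rj; apply: h.
have reachedS j : reached phi grad sigma m w wi j.+1 -> reached phi grad sigma m w wi j.
  by move=> rj k kj; apply: rj; apply: ltnW.
have Dw : forall j, reached phi grad sigma m w wi j -> D (w j).
  elim=> [|j IH] rj; first by rewrite w00.
  have tj : terminates phi grad sigma m w wi j by apply: rj.
  have [_ _ h] := H j (reachedS j rj).
  have [i1 _ _ ->] := h tj.
  by have [] := Qji j (ij j) (reachedS j rj) i1.
have rejl j i : reached phi grad sigma m w wi j -> ~ accept phi grad sigma m w wi j i ->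
    phi (w j) + sigma * dot (grad (w j)) (wi j i - w j) < phi (wi j i).
  move=> rj na; rewrite ltNge; apply/negP => hle; apply: na.
  rewrite /accept; apply: le_trans hle _.
  by rewrite lerD2r refval_self.
split.
  move=> j rj nt.
  have Dx := Dw j rj.
  have na i : (1 <= i)%N -> ~ accept phi grad sigma m w wi j i.
    by move=> i1 ai; apply: nt; exists i.
  have [c1 c2 c3] := @case_i_shift R n phi grad D (w j) (fun i => wi j i.+1)
    (fun i => gam tau g0 j i.+1) sigma C1 s01 Dx
    (fun i => gampos j i.+1 rj)
    ltac:(move=> K; have [M HM] := pow_inf t1 (g0pos j rj) K; exists M => i Mi; exact: HM)
    (fun i => Qji j i.+1 rj isT)
    (fun i => rejl j i.+1 rj (na i.+1 isT)).
  split.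
  - by apply/cvP; apply: cv_shift.
  - exact: c2.
  - by apply/cvP; apply: cv_shift.
move=> allt.
have allr j : reached phi grad sigma m w wi j by move=> k _; apply: allt.
pose gm j := gam tau g0 j (ij j).
have Hj j := (H j (allr j)).
have T j : [/\ (1 <= ij j)%N, accept phi grad sigma m w wi j (ij j),
    (forall i, (1 <= i < ij j)%N -> ~ accept phi grad sigma m w wi j i) &
    w j.+1 = wi j (ij j)].
  by have [_ _ h] := Hj j; apply: h.
have DW j : D (w j) := Dw j (allr j).
have Q j : Qopt phi grad D (w j) (gm j) (w j.+1).
  by have [i1 _ _ ->] := T j; apply: Qji.
have acc j : phi (w j.+1) <= refval phi w m j + sigma * dot (grad (w j)) (w j.+1 - w j).
  by have [_ a _ ->] := T j; exact: a.
have gmg j : gmin <= gm j.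
  have [/andP[h _] _ _] := Hj j.
  rewrite /gm /gam; apply: (le_trans h); rewrite ler_peMl //.
    by apply: le_trans h; apply: ltW.
  by apply: exprn_ege1; apply: ltW.
have rej j : gm j <= gmax \/ exists gh p, [/\ 0 < gh, gm j = tau * gh,
       Qopt phi grad D (w j) gh p & phi (w j) + sigma * dot (grad (w j)) (p - w j) < phi p].
  have [i1 _ nacc _] := T j.
  have [/andP[_ hg] _ _] := Hj j.
  move: i1 nacc; rewrite /gm; case E: (ij j) => [|[|k]] // _ nacc.
    by left; rewrite /gam expr0 mul1r.
  right; exists (gam tau g0 j k.+1), (wi j k.+1); split.
  - by apply: gampos.
  - by rewrite /gam /= exprS mulrA.
  - by apply: Qji.
  - by apply: rejl => //; apply: nacc; rewrite /= ltnS ltnSn.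
have desc0 j : sigma * dot (grad (w j)) (w j.+1 - w j) <= 0.
  have hd := Q_descent (Q j) (DW j).
  have h1 := dot_ge0 (w j.+1 - w j).
  have h2 : 0 <= gm j / 2 * dot (w j.+1 - w j) (w j.+1 - w j).
    by apply: mulr_ge0 => //; apply: divr_ge0 => //; apply: le_trans (gmg j); apply: ltW.
  have h3 : dot (grad (w j)) (w j.+1 - w j) <= 0 by lra.
  by rewrite mulr_ge0_le0 // ltW.
have sub : forall j k, (k <= j)%N -> phi (w k) <= phi w0.
  elim=> [|j IH] k kj.
    by move: kj; rewrite leqn0 => /eqP ->; rewrite w00.
  case: (ltnP k j.+1) => hk; first by apply: IH.
  have -> : k = j.+1 by apply/eqP; rewrite eqn_leq kj hk.
  apply: le_trans (acc j) _; have := desc0 j.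
  have : refval phi w m j <= phi w0.
    by apply: refval_le => r _; apply: IH; apply: leq_subr.
  lra.
have wM j : `|w j| <= M0.
  apply: le_trans (norm_le_enorm _) _; apply: HM0; first exact: DW.
  exact: (sub j j (leqnn j)).
split.
  have [s [l [sinc hl]]] := bw_rV wM.
  by exists s, l; split => //; apply/cvP.
move=> s wbar sinc /cvP cws.
have [ms cvs] := @case_ii_sub R n phi grad D sigma tau gmin gmax M0 m w gm s wbar
  C1 s01 t1 gmin0 gg DW wM gmg Q acc rej sinc cws.
by split => //; apply/cvP.
Qed.
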